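(* For all $a,b\in\mathbb{B}^n$, \[ \mathrm{th}\left(\frac{h_{\mathbb{B}^n}(a,b)}{4}\right)\ge\frac{|a-b|}{\sqrt{4-|a+b|^2}}. \] Equality holds if $a=-b$.
   Context: $\mathbb{B}^n$ is the unit ball of $\mathbb{R}^n$. Hilbert metric: for distinct $a,b$ in a bounded convex domain $G\subset\mathbb{R}^n$, let $u,v$ be the intersection points of the line through $a,b$ with $\partial G$, ordered $u,a,b,v$ on the line; $h_G(a,b)=\log\frac{|u-b||a-v|}{|u-a||b-v|}$, and $h_G(a,a)=0$. *)

(* Defs.v *)
From HB Require Import structures.
From mathcomp Require Import all_boot all_order all_algebra.
From mathcomp Require Import all_classical all_reals all_analysis.
Set Implicit Arguments. Unset Strict Implicit. Unset Printing Implicit Defensive.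
Import Order.TTheory GRing.Theory Num.Theory.
Local Open Scope classical_set_scope.
Local Open Scope ring_scope.

Section Defs.
Variable R : realType.

Definition enorm (n : nat) (x : 'rV[R]_n) : R :=
  Num.sqrt (\sum_(i < n) x ord0 i ^+ 2).

Definition unit_ball (n : nat) : set 'rV[R]_n := [set x | enorm x < 1].

Definition th (x : R) : R := (expR x - expR (- x)) / (expR x + expR (- x)).

Definition line_params (n : nat) (G : set 'rV[R]_n) (a b : 'rV[R]_n) : set R :=
  [set t | G (a + t *: (b - a))].

(* Hilbert metric of a bounded (open) convex domain G: u, v are the
   intersection points of the line through a, b with the boundary of G,
   ordered u, a, b, v (u = a + t1 (b - a) with t1 = inf, v with t2 = sup). *)
Definition hilbert_metric (n : nat) (G : set 'rV[R]_n) (a b : 'rV[R]_n) : R :=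
  if a == b then 0 else
  let u := a + inf (line_params G a b) *: (b - a) in
  let v := a + sup (line_params G a b) *: (b - a) in
  ln ((enorm (u - b) * enorm (a - v)) / (enorm (u - a) * enorm (b - v))).

End Defs.

(* Main.v *)
Require Import Defs.
From HB Require Import structures.
From mathcomp Require Import all_boot all_order all_algebra.
From mathcomp Require Import all_classical all_reals all_analysis.
From mathcomp Require Import ring lra.
Import Order.TTheory GRing.Theory Num.Theory.
Local Open Scope classical_set_scope.
Local Open Scope ring_scope.

Lemma sq_eq_nonneg (R : realFieldType) (x y : R) : 0 <= x -> 0 <= y -> x ^+ 2 = y ^+ 2 -> x = y.
Proof.
move=> hx hy h.
have : (x - y) * (x + y) = 0 by rewrite -subr_sqr h subrr.
move/eqP; rewrite mulf_eq0 => /orP [/eqP e|/eqP e]; first by apply/eqP; rewrite -subr_eq0 e.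
lra.
Qed.

Lemma sq_le_nonneg (R : realFieldType) (x y : R) : 0 <= y -> x ^+ 2 <= y ^+ 2 -> x <= y.
Proof. move=> hy h; rewrite !expr2 in h; nra. Qed.

Lemma real_key (R: realType) (sa sad sdd t1 t2 q : R) :
 0 < sdd -> t1 < 0 -> 1 < t2 -> sa < 1 -> sa + 2*sad + sdd < 1 ->
 sdd*(t1+t2) = -2*sad -> sdd*(t1*t2) = sa - 1 -> 0 < q ->
 q^+2 * ((-t1)*(t2-1)) = (1-t1)*t2 ->
 Num.sqrt sdd / Num.sqrt (4 - (4*sa + 4*sad + sdd)) <= (q-1)/(q+1) /\
 (2*sad + sdd = 0 -> Num.sqrt sdd / Num.sqrt (4 - (4*sa + 4*sad + sdd)) = (q-1)/(q+1)).
Proof.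
move=> hd ht1 ht2 ha hb hs hp hq hC.
set S := 4 - _.
set al := 1 - sa. set be := 1 - (sa + 2*sad + sdd). set X := 1 - sa - sad.
set N := (1-t1)*t2. set D := (-t1)*(t2-1).
have {hC} hC : q^+2 * D = N by [].
have hN : 0 < N by apply: mulr_gt0; lra.
have hD : 0 < D by apply: mulr_gt0; lra.
have hX : sdd * (N + D) = 2 * X.
  have -> : sdd * (N + D) = sdd*(t1+t2) - 2 * (sdd*(t1*t2)) by rewrite /N /D; ring.
  rewrite hs hp /X; ring.
have hND : sdd^+2 * (N * D) = al * be.
  have -> : sdd^+2 * (N * D) = - (sdd*(t1*t2)) * (sdd*(t1+t2) - sdd - sdd*(t1*t2)) by rewrite /N /D; ring.
  rewrite hs hp /al /be; ring.
have Xp : 0 < X.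
  have : 0 < sdd * (N + D) by apply: mulr_gt0; lra.
  lra.
have alp : 0 < al by rewrite /al; lra.
have bep : 0 < be by rewrite /be; lra.
have hq1 : 1 < q.
  have : D < N by rewrite /N /D; nra.
  move=> h.
  have : 1 < q^+2 by rewrite -(ltr_pM2r hD) mul1r hC.
  nra.
have hq2 : (q^+2 + 1) * D = N + D by rewrite mulrDl hC mul1r.
have key : (q^+2+1)^+2 * (al * be) = 4 * q^+2 * X^+2.
  apply: (@mulIf _ (D^+2)); first by rewrite expf_neq0 // gt_eqF.
  have -> : (q ^+ 2 + 1) ^+ 2 * (al * be) * D ^+ 2 = ((q^+2+1) * D)^+2 * (al * be) by ring.
  rewrite hq2 -hND.
  have -> : (N + D) ^+ 2 * (sdd ^+ 2 * (N * D)) = (sdd * (N + D))^+2 * (N * D) by ring.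
  rewrite hX -hC; ring.
have step1 : 4 * q * X <= (q^+2+1) * (al + be).
  have h2 : (4 * q * X)^+2 <= ((q^+2+1) * (al + be))^+2.
    have -> : (4 * q * X)^+2 = 4 * ((q^+2+1)^+2 * (al * be)) by rewrite key; ring.
    rewrite -subr_ge0.
    have -> : ((q ^+ 2 + 1) * (al + be)) ^+ 2 - 4 * ((q ^+ 2 + 1) ^+ 2 * (al * be)) = ((q^+2+1) * (al - be))^+2 by ring.
    exact: sqr_ge0.
  apply: sq_le_nonneg h2; apply: mulr_ge0; have := sqr_ge0 q; lra.
have hS : 0 < S by rewrite /S; lra.
have Sid : (q-1)^+2 * S - sdd * (q+1)^+2 = 2 * ((q^+2+1) * (al + be) - 4 * q * X).
  rewrite /S /al /be /X; ring.
have sm := sqr_sqrtr (ltW hd). have ss := sqr_sqrtr (ltW hS).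
have m0 := sqrtr_ge0 sdd. have s0 : 0 < Num.sqrt S by rewrite sqrtr_gt0.
have fin : forall u v : R, 0 < v -> u * (q+1) <= (q-1) * v -> u / v <= (q-1)/(q+1).
  move=> u v hv h; rewrite -subr_ge0.
  have -> : (q-1)/(q+1) - u/v = ((q-1)*v - u*(q+1)) / ((q+1)*v).
    by field; apply/andP; split; rewrite gt_eqF //; lra.
  apply: divr_ge0; first lra.
  apply: mulr_ge0; lra.
split.
  apply: fin => //.
  have h : (Num.sqrt sdd * (q+1))^+2 <= ((q-1) * Num.sqrt S)^+2.
    rewrite !exprMn sm ss -subr_ge0. nra.
  apply: sq_le_nonneg h; apply: mulr_ge0; lra.
move=> he.
have albe : al = be by rewrite /al /be; lra.
have e1 : 4 * q * X = (q^+2+1) * (al + be).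
  apply: sq_eq_nonneg.
  - by apply: mulr_ge0; [apply: mulr_ge0|]; lra.
  - by apply: mulr_ge0; have := sqr_ge0 q; lra.
  have -> : (4 * q * X)^+2 = 4 * ((q^+2+1)^+2 * (al * be)) by rewrite key; ring.
  rewrite albe; ring.
have e2 : Num.sqrt sdd * (q+1) = (q-1) * Num.sqrt S.
  apply: sq_eq_nonneg.
  - by apply: mulr_ge0; lra.
  - by apply: mulr_ge0; lra.
  rewrite !exprMn sm ss; apply/eqP; rewrite eq_sym -subr_eq0 Sid e1 subrr mulr0 //.
have q0 : q + 1 != 0 by rewrite gt_eqF //; lra.
have S0 : Num.sqrt S != 0 by rewrite gt_eqF.
have -> : (q-1)/(q+1) = ((q-1)*Num.sqrt S)/((q+1)*Num.sqrt S).
  by field; rewrite q0 S0.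
rewrite -e2; field; rewrite q0 S0 //.
Qed.


Definition sq {R : realType} {n} (x y : 'rV[R]_n) := \sum_(i < n) x ord0 i * y ord0 i.

Lemma enorm_sq (R : realType) n (x : 'rV[R]_n) : enorm x = Num.sqrt (sq x x).
Proof. by rewrite /enorm /sq; congr Num.sqrt; apply: eq_bigr => i _; rewrite expr2. Qed.

Lemma sq_ge0 (R : realType) n (x : 'rV[R]_n) : 0 <= sq x x.
Proof. by apply: sumr_ge0 => i _; rewrite -expr2 sqr_ge0. Qed.

Lemma sq_eq0 (R : realType) n (x : 'rV[R]_n) : sq x x = 0 -> x = 0.
Proof.
move=> h; apply/rowP => i; rewrite mxE.
have /eqP : x ord0 i * x ord0 i = 0.
  by apply: (psumr_eq0P _ h) => // j _; rewrite -expr2 sqr_ge0.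
by rewrite mulf_eq0 orbb => /eqP.
Qed.

Lemma sq_comb (R : realType) n (a d w : 'rV[R]_n) (u v : R) :
  (forall i, w ord0 i = u * a ord0 i + v * d ord0 i) ->
  sq w w = u^+2 * sq a a + 2*u*v * sq a d + v^+2 * sq d d.
Proof.
move=> h; rewrite /sq !mulr_sumr -!big_split /=; apply: eq_bigr => i _; rewrite h; ring.
Qed.

Lemma sqrt_sqM (R : realType) (x s : R) : Num.sqrt (x^+2 * s) = `|x| * Num.sqrt s.
Proof. by rewrite sqrtrM ?sqr_ge0 // sqrtr_sqr. Qed.

Lemma sqrt_lt1 (R: realType) (x:R) : (Num.sqrt x < 1) = (x < 1).
Proof. by have := @ltr_sqrt R x 1 ltr01; rewrite sqrtr1. Qed.

Theorem corollary3p8 (R : realType) (n : nat) (a b : 'rV[R]_n) :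
  @unit_ball R n a -> @unit_ball R n b ->
  th (hilbert_metric (@unit_ball R n) a b / 4)
    >= enorm (a - b) / Num.sqrt (4 - enorm (a + b) ^+ 2)
  /\ (a = - b ->
      th (hilbert_metric (@unit_ball R n) a b / 4)
        = enorm (a - b) / Num.sqrt (4 - enorm (a + b) ^+ 2)).
Proof.
move=> ha.
have [d ->] : exists d, b = a + d by exists (b - a); rewrite addrC subrK.
move=> hb.
have [->|dn0] := eqVneq d 0.
  rewrite addr0 subrr /hilbert_metric eqxx mul0r /th oppr0 subrr mul0r.
  have -> : enorm (0 : 'rV[R]_n) = 0 by rewrite /enorm big1 ?sqrtr0 // => i _; rewrite mxE expr0n.
  by rewrite mul0r; split.
have ha' : enorm a < 1 := ha.
have hb' : enorm (a + d) < 1 := hb.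
clear ha hb.
have Eab : enorm (a - (a + d)) = Num.sqrt (sq d d).
  rewrite enorm_sq (@sq_comb _ _ a d _ 0 (-1)); last by move=> i; rewrite !mxE; ring.
  congr Num.sqrt; ring.
have Eapb : enorm (a + (a + d)) ^+ 2 = 4 * sq a a + 4 * sq a d + sq d d.
  rewrite enorm_sq sqr_sqrtr ?sq_ge0 // (@sq_comb _ _ a d _ 2 1); last by move=> i; rewrite !mxE; ring.
  ring.
rewrite Eab Eapb.
have sdd0 : 0 < sq d d.
  rewrite lt_def sq_ge0 andbT; apply/eqP => /sq_eq0 h; by rewrite h eqxx in dn0.
have hsa : sq a a < 1 by rewrite enorm_sq -sqrtr1 ltr_sqrt // in ha'.
have hsb : sq a a + 2 * sq a d + sq d d < 1.
  move: hb'; rewrite enorm_sq (@sq_comb _ _ a d _ 1 1); last by move=> i; rewrite !mxE; ring.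
  rewrite sqrt_lt1 => h; lra.
pose D := sq a d ^+ 2 - sq d d * (sq a a - 1).
have D0 : 0 < D.
  have := sqr_ge0 (sq a d).
  have : 0 < sq d d * (1 - sq a a) by apply: mulr_gt0; lra.
  rewrite /D; lra.
pose r := Num.sqrt D.
have r0 : 0 < r by rewrite sqrtr_gt0.
have r2 : r ^+ 2 = D by rewrite sqr_sqrtr // ltW.
have sddn0 : sq d d != 0 by rewrite gt_eqF.
pose t1 := (- sq a d - r) / sq d d.
pose t2 := (- sq a d + r) / sq d d.
have t12 : t1 < t2.
  have -> : t1 = t2 - 2 * r / sq d d by rewrite /t1 /t2; field.
  have : 0 < 2 * r / sq d d by apply: divr_gt0 => //; lra.
  lra.
have hf : forall t, 1 ^+ 2 * sq a a + 2 * 1 * t * sq a d + t ^+ 2 * sq d d - 1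
                    = sq d d * ((t - t1) * (t - t2)).
  move=> t.
  have -> : sq d d * ((t - t1) * (t - t2)) = ((sq d d * t + sq a d) ^+ 2 - r ^+ 2) / sq d d.
    by rewrite /t1 /t2; field.
  by rewrite r2 /D; field.
have hiff : forall t, (1 ^+ 2 * sq a a + 2 * 1 * t * sq a d + t ^+ 2 * sq d d < 1) = (t1 < t < t2).
  move=> t; apply/idP/idP.
    move=> h.
    have : sq d d * ((t - t1) * (t - t2)) < 0 by rewrite -hf; lra.
    rewrite pmulr_rlt0 // => h2; apply/andP; split; nra.
  case/andP => h1 h2.
  have h3 : 0 < sq d d * ((t - t1) * (t2 - t)) by apply: mulr_gt0 => //; apply: mulr_gt0; lra.
  have := hf t; lra.
have Lp : line_params (@unit_ball R n) a (a + d) = `]t1, t2[%classic.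
  rewrite set_itvoo; apply/seteqP; split => t /=.
    rewrite /line_params /unit_ball /= enorm_sq (@sq_comb _ _ a d _ 1 t); last by move=> i; rewrite !mxE; ring.
    rewrite sqrt_lt1 hiff => h; by [].
  rewrite -hiff -sqrt_lt1 => h.
  rewrite /line_params /unit_ball /= enorm_sq (@sq_comb _ _ a d _ 1 t) //.
  by move=> i; rewrite !mxE; ring.
have t10 : t1 < 0.
  have := hiff 0.
  have -> : 1 ^+ 2 * sq a a + 2 * 1 * 0 * sq a d + 0 ^+ 2 * sq d d = sq a a by ring.
  by rewrite hsa => /esym /andP [].
have t21 : 1 < t2.
  have := hiff 1.
  have -> : 1 ^+ 2 * sq a a + 2 * 1 * 1 * sq a d + 1 ^+ 2 * sq d d = sq a a + 2 * sq a d + sq d d by ring.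
  by rewrite hsb => /esym /andP [].
have neq : (a == a + d) = false.
  apply/negbTE/eqP => h; move/eqP: dn0; apply.
  by apply: (@addrI _ a); rewrite addr0 -h.
rewrite /hilbert_metric neq Lp /=. rewrite inf_itv ?sup_itv ?bnd_simp //.
have E1 : enorm (a + t1 *: (a + d - a) - (a + d)) = `|t1 - 1| * Num.sqrt (sq d d).
  rewrite enorm_sq (@sq_comb _ _ a d _ 0 (t1 - 1)); last by move=> i; rewrite !mxE; ring.
  by rewrite -sqrt_sqM; congr Num.sqrt; ring.
have E2 : enorm (a - (a + t2 *: (a + d - a))) = `|t2| * Num.sqrt (sq d d).
  rewrite enorm_sq (@sq_comb _ _ a d _ 0 (- t2)); last by move=> i; rewrite !mxE; ring.
  by rewrite -sqrt_sqM; congr Num.sqrt; ring.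
have E3 : enorm (a + t1 *: (a + d - a) - a) = `|t1| * Num.sqrt (sq d d).
  rewrite enorm_sq (@sq_comb _ _ a d _ 0 t1); last by move=> i; rewrite !mxE; ring.
  by rewrite -sqrt_sqM; congr Num.sqrt; ring.
have E4 : enorm (a + d - (a + t2 *: (a + d - a))) = `|1 - t2| * Num.sqrt (sq d d).
  rewrite enorm_sq (@sq_comb _ _ a d _ 0 (1 - t2)); last by move=> i; rewrite !mxE; ring.
  by rewrite -sqrt_sqM; congr Num.sqrt; ring.
rewrite E1 E2 E3 E4 (ltr0_norm (_ : t1 - 1 < 0)); last lra.
rewrite (gtr0_norm (_ : 0 < t2)); last lra.
rewrite (ltr0_norm (_ : t1 < 0)) // (ltr0_norm (_ : 1 - t2 < 0)); last lra.
have m0 : 0 < Num.sqrt (sq d d) by rewrite sqrtr_gt0.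
have EC : (- (t1 - 1) * Num.sqrt (sq d d) * (t2 * Num.sqrt (sq d d))) /
          (- t1 * Num.sqrt (sq d d) * (- (1 - t2) * Num.sqrt (sq d d)))
          = (1 - t1) * t2 / ((- t1) * (t2 - 1)).
  field; apply/and4P; split; [apply/eqP => h; lra|apply/eqP => h; lra|by rewrite gt_eqF|apply/eqP => h; lra].
rewrite EC.
set C := (1 - t1) * t2 / ((- t1) * (t2 - 1)).
have C0 : 0 < C by rewrite /C; apply: divr_gt0; apply: mulr_gt0; lra.
rewrite /th expRN.
set y := expR (ln C / 4).
have y0 : 0 < y by apply: expR_gt0.
have y4 : y ^+ 4 = C.
  rewrite /y -expRM_natl mulrC divfK ?lnK ?posrE //.
have Eth : (y - y^-1) / (y + y^-1) = (y ^+ 2 - 1) / (y ^+ 2 + 1).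
  field.
  have : 0 < y ^+ 2 + 1 by have := sqr_ge0 y; lra.
  by move=> h; rewrite !gt_eqF.
rewrite Eth.
have hs : sq d d * (t1 + t2) = -2 * sq a d by rewrite /t1 /t2; field.
have hp : sq d d * (t1 * t2) = sq a a - 1.
  have -> : sq d d * (t1 * t2) = (sq a d ^+ 2 - r ^+ 2) / sq d d by rewrite /t1 /t2; field.
  by rewrite r2 /D; field.
have hq : (y ^+ 2) ^+ 2 * ((- t1) * (t2 - 1)) = (1 - t1) * t2.
  rewrite -exprM y4 /C; field.
  apply/andP; split; apply/eqP => h; lra.
have [H1 H2] := @real_key R (sq a a) (sq a d) (sq d d) t1 t2 (y ^+ 2)
  sdd0 t10 t21 hsa hsb hs hp (exprn_gt0 2 y0) hq.
split; first exact: H1.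
move=> e; rewrite H2 //.
rewrite /sq mulr_sumr -big_split big1 // => i _ /=.
have := congr1 (fun M : 'rV[R]_n => M ord0 i) e; rewrite !mxE => h.
have hd : d ord0 i = -2 * a ord0 i by lra.
rewrite hd; ring.
Qed.
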